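(* Let $a_0,a_1,a_2,a_3\in\mathbb{R}$ and for real $\lambda$ let $$\mathbf{M}_\lambda=\begin{bmatrix}1&\frac{a_3}{2}&\frac{a_2-\lambda}{2}\\[2pt] \frac{a_3}{2}&\lambda&\frac{a_1}{2}\\[2pt] \frac{a_2-\lambda}{2}&\frac{a_1}{2}&a_0\end{bmatrix}.$$ For $\lambda_i\in\mathbb{R}$, the conic $\mathbf{M}_{\lambda_i}$ is a degenerate conic consisting of a real repeated line if and only if $\lambda_i=\frac{a_3^2}{4}$ and $\lambda_i$ is a root of multiplicity at least $2$ of the cubic equation $\det(\mathbf{M}_\lambda)=0$ in $\lambda$.
   Context: A real symmetric $3\times3$ matrix $\mathbf{M}$ defines the conic $\{[u:v:w]\in\mathbb{P}^2(\mathbb{C}) : (u,v,w)\mathbf{M}(u,v,w)^T=0\}$. The conic ''consists of a real repeated line'' if the quadratic form $(u,v,w)\mathbf{M}(u,v,w)^T$ equals $c\,\ell^2$ for some nonzero real constant $c$ and some nonzero linear form $\ell$ with real coefficients. Explicitly, $\det(\mathbf{M}_\lambda)=-\tfrac14\lambda^3+b_2\lambda^2+b_1\lambda+b_0$ with $b_0=\tfrac14(-a_1^2+a_1a_2a_3-a_0a_3^2)$, $b_1=\tfrac14(4a_0-a_2^2-a_1a_3)$, $b_2=\tfrac{a_2}{2}$. *)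

(* Defs.v *)
From HB Require Import structures.
From mathcomp Require Import all_boot all_order all_algebra.
Set Implicit Arguments. Unset Strict Implicit. Unset Printing Implicit Defensive.
Import Order.TTheory GRing.Theory Num.Theory.
Local Open Scope ring_scope.

Definition Mlam (R : realFieldType) (a0 a1 a2 a3 l : R) : 'M[R]_3 :=
  \matrix_(i < 3, j < 3)
    nth 0 (nth [::]
      [:: [:: 1; a3 / 2; (a2 - l) / 2];
          [:: a3 / 2; l; a1 / 2];
          [:: (a2 - l) / 2; a1 / 2; a0]] i) j.

Definition Mpoly (R : realFieldType) (a0 a1 a2 a3 : R) : 'M[{poly R}]_3 :=
  \matrix_(i < 3, j < 3)
    nth 0 (nth [::]
      [:: [:: 1; (a3 / 2)%:P; (a2 / 2)%:P - 2^-1 *: 'X];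
          [:: (a3 / 2)%:P; 'X; (a1 / 2)%:P];
          [:: (a2 / 2)%:P - 2^-1 *: 'X; (a1 / 2)%:P; a0%:P]] i) j.

Definition detpoly (R : realFieldType) (a0 a1 a2 a3 : R) : {poly R} :=
  \det (Mpoly a0 a1 a2 a3).

Definition qform (R : realFieldType) (M : 'M[R]_3) (x : 'rV[R]_3) : R :=
  (x *m M *m x^T) 0 0.

Definition linform (R : realFieldType) (l x : 'rV[R]_3) : R :=
  (x *m l^T) 0 0.

Definition real_repeated_line (R : realFieldType) (M : 'M[R]_3) : Prop :=
  exists (c : R) (l : 'rV[R]_3),
    c != 0 /\ l != 0 /\ forall x : 'rV[R]_3, qform M x = c * (linform l x) ^+ 2.

(* Main.v *)
From HB Require Import structures.
From mathcomp Require Import all_boot all_order all_algebra.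
From mathcomp Require Import ring lra.
Import Order.TTheory GRing.Theory Num.Theory.
Local Open Scope ring_scope.
Set Implicit Arguments. Unset Strict Implicit. Unset Printing Implicit Defensive.
Require Import Defs.
Lemma det3 (R : comNzRingType) (A : 'M[R]_3) : \det A =
  A 0 0 * (A 1 1 * A 2 2 - A 1 2 * A 2 1)
  - A 0 1 * (A 1 0 * A 2 2 - A 1 2 * A 2 0)
  + A 0 2 * (A 1 0 * A 2 1 - A 1 1 * A 2 0).
Proof.
pose f (n m : nat) := A (inord n) (inord m).
have EA : A = \matrix_(i, j) f i j.
  apply/matrixP=> i j; rewrite mxE /f !inord_val //.
rewrite [in LHS]EA.
rewrite (expand_det_row _ 0) !big_ord_recl big_ord0 /cofactor.
rewrite !(expand_det_row _ 0) !big_ord_recl !big_ord0 /cofactor !det_mx11 !mxE /=.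
rewrite EA !mxE /=.
rewrite /f /=. ring.
Qed.
Lemma L1 : lift ord0 (ord0 : 'I_2) = 1 :> 'I_3. Proof. exact: val_inj. Qed.
Lemma L2 : lift ord0 (lift ord0 (ord0 : 'I_1)) = 2 :> 'I_3. Proof. exact: val_inj. Qed.
Lemma L0 : ord0 = 0 :> 'I_3. Proof. exact: val_inj. Qed.
Lemma qformE (R : realFieldType) (M : 'M[R]_3) x :
  qform M x = x 0 0 * (M 0 0 * x 0 0 + M 0 1 * x 0 1 + M 0 2 * x 0 2)
            + x 0 1 * (M 1 0 * x 0 0 + M 1 1 * x 0 1 + M 1 2 * x 0 2)
            + x 0 2 * (M 2 0 * x 0 0 + M 2 1 * x 0 1 + M 2 2 * x 0 2).
Proof.
rewrite /qform !mxE !big_ord_recl !big_ord0 !mxE.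
rewrite !big_ord_recl !big_ord0 ?L1 ?L2 ?L0. ring.
Qed.
Lemma linformE (R : realFieldType) (l : 'rV[R]_3) x :
  linform l x = x 0 0 * l 0 0 + x 0 1 * l 0 1 + x 0 2 * l 0 2.
Proof.
rewrite /linform !mxE !big_ord_recl big_ord0 !mxE ?L1 ?L2 ?L0. ring.
Qed.
Definition vec {R : realFieldType} (p q r : R) : 'rV[R]_3 := \row_(j < 3) nth 0 [:: p; q; r] j.
Lemma vecE (R : realFieldType) (p q r : R) : [/\ vec p q r 0 0 = p, vec p q r 0 1 = q & vec p q r 0 2 = r].
Proof. by rewrite /vec !mxE. Qed.
Definition cb (R : realFieldType) (a3 : R) := a3 / 2.
Definition cc0 (R : realFieldType) (a2 a3 : R) := a2 / 2 - 2^-1 * cb a3 ^+ 2.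
Definition ce (R : realFieldType) (a1 a2 a3 : R) := a1 / 2 - cb a3 * cc0 a2 a3.
Definition cf (R : realFieldType) (a0 a2 a3 : R) := a0 - cc0 a2 a3 ^+ 2.
Definition k1 (R : realFieldType) (a0 a1 a2 a3 : R) :=
  cf a0 a2 a3 - 2 * ce a1 a2 a3 * cb a3 * 2^-1.
Definition k0 (R : realFieldType) (a1 a2 a3 : R) := - ce a1 a2 a3 ^+ 2.
Definition Tp (R : realFieldType) (a3 : R) : {poly R} := 'X - (cb a3 ^+ 2)%:P.
Definition Qp (R : realFieldType) (a2 a3 : R) : {poly R} :=
  (2 * cc0 a2 a3 * 2^-1 - cb a3 ^+ 2 * 2^-1 ^+ 2)%:P - (2^-1 ^+ 2)%:P * Tp a3.

Lemma detpolyE (R : realFieldType) (a0 a1 a2 a3 : R) :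
  detpoly a0 a1 a2 a3 = Tp a3 ^+ 2 * Qp a2 a3
     + (k1 a0 a1 a2 a3)%:P * Tp a3 + (k0 a1 a2 a3)%:P.
Proof.
rewrite /detpoly det3 !mxE /=.
rewrite /Qp /Tp /k1 /k0 /cf /ce /cc0 /cb.
rewrite -!mul_polyC.
rewrite !(rmorphB, rmorphD, rmorphM, rmorphN, rmorphXn) /=.
ring.
Qed.

Theorem lemma3 (R : realFieldType) (a0 a1 a2 a3 li : R) :
  real_repeated_line (Mlam a0 a1 a2 a3 li) <->
  (li = a3 ^+ 2 / 4 /\ ('X - li%:P) ^+ 2 %| detpoly a0 a1 a2 a3).
Proof.
split.
- move=> [c [l [cn0 [ln0 H]]]].
  pose F p q r := p * (1 * p + a3 / 2 * q + (a2 - li) / 2 * r) + q * (a3 / 2 * p + li * q + a1 / 2 * r)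
     + r * ((a2 - li) / 2 * p + a1 / 2 * q + a0 * r) - c * (p * l 0 0 + q * l 0 1 + r * l 0 2) ^+ 2.
  have E p q r : F p q r = 0.
    have := H (vec p q r); rewrite qformE linformE; case: (vecE p q r) => -> -> ->.
    by rewrite !mxE /= /F => ->; rewrite subrr.
  have h1 : 1 = c * l 0 0 ^+ 2.
    apply/eqP; rewrite -subr_eq0; apply/eqP; rewrite -(E 1 0 0) /F; ring.
  have Hli : li = c * l 0 1 ^+ 2.
    apply/eqP; rewrite -subr_eq0; apply/eqP; rewrite -(E 0 1 0) /F; ring.
  have A0 : a0 = c * l 0 2 ^+ 2.
    apply/eqP; rewrite -subr_eq0; apply/eqP; rewrite -(E 0 0 1) /F; ring.
  have A3 : a3 = 2 * c * l 0 0 * l 0 1.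
    apply/eqP; rewrite -subr_eq0; apply/eqP.
    have -> : a3 - 2 * c * l 0 0 * l 0 1 = F 1 1 0 - F 1 0 0 - F 0 1 0 by rewrite /F /=; field.
    by rewrite !E !subr0.
  have A2 : a2 = li + 2 * c * l 0 0 * l 0 2.
    apply/eqP; rewrite -subr_eq0; apply/eqP.
    have -> : a2 - (li + 2 * c * l 0 0 * l 0 2) = F 1 0 1 - F 1 0 0 - F 0 0 1 by rewrite /F; field.
    by rewrite !E !subr0.
  have A1 : a1 = 2 * c * l 0 1 * l 0 2.
    apply/eqP; rewrite -subr_eq0; apply/eqP.
    have -> : a1 - 2 * c * l 0 1 * l 0 2 = F 0 1 1 - F 0 1 0 - F 0 0 1 by rewrite /F; field.
    by rewrite !E !subr0.
  have x0n : l 0 0 != 0.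
    by apply/eqP => h; move: h1; rewrite h expr0n /= mulr0 => /eqP; rewrite oner_eq0.
  have Hc : c = (l 0 0 ^+ 2)^-1.
    apply: (mulIf (expf_neq0 2 x0n)); by rewrite mulVf ?expf_neq0 // -h1.
  clear E F H.
  subst a0 a1 a3 a2 li c.
  split; first by field.
  have HT : 'X - ((l 0 0 ^+ 2)^-1 * l 0 1 ^+ 2)%:P = Tp (2 * (l 0 0 ^+ 2)^-1 * l 0 0 * l 0 1).
    by rewrite /Tp /cb; congr (_ - _%:P); field.
  have e0 : ce (2 * (l 0 0 ^+ 2)^-1 * l 0 1 * l 0 2)
     ((l 0 0 ^+ 2)^-1 * l 0 1 ^+ 2 + 2 * (l 0 0 ^+ 2)^-1 * l 0 0 * l 0 2)
     (2 * (l 0 0 ^+ 2)^-1 * l 0 0 * l 0 1) = 0.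
    by rewrite /ce /cc0 /cb; field.
  rewrite detpolyE HT /k1 /k0 e0.
  have f0 : cf ((l 0 0 ^+ 2)^-1 * l 0 2 ^+ 2)
     ((l 0 0 ^+ 2)^-1 * l 0 1 ^+ 2 + 2 * (l 0 0 ^+ 2)^-1 * l 0 0 * l 0 2)
     (2 * (l 0 0 ^+ 2)^-1 * l 0 0 * l 0 1) = 0.
    by rewrite /cf /cc0 /cb; field.
  rewrite f0 !mulr0 !mul0r subr0 expr0n /= oppr0 polyC0 mul0r !addr0.
  exact: dvdp_mulr.
- move=> [Hli Hdiv].
  have HT : 'X - li%:P = Tp a3 by rewrite /Tp /cb Hli; congr (_ - _%:P); field.
  rewrite detpolyE HT -addrA dvdp_addr in Hdiv; last exact: dvdp_mulr _ (dvdpp _).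
  have r0 : root ((k1 a0 a1 a2 a3)%:P * Tp a3 + (k0 a1 a2 a3)%:P) (cb a3 ^+ 2).
    rewrite -dvdp_XsubCl; rewrite expr2 in Hdiv.
    exact: dvdp_trans (dvdp_mulr _ (dvdpp _)) Hdiv.
  move: r0; rewrite /root /Tp !hornerE subrr mulr0 add0r.
  rewrite /k0 oppr_eq0 expf_eq0 /= => /eqP e0.
  move: Hdiv; rewrite /k0 e0 expr0n /= oppr0 polyC0 addr0 expr2 dvdp_mul2r ?polyXsubC_eq0 //.
  rewrite /Tp dvdp_XsubCl rootC /k1 e0 !mulr0 !mul0r subr0 => /eqP f0.
  have A0 : a0 = cc0 a2 a3 ^+ 2 by apply/eqP; rewrite -subr_eq0; apply/eqP.
  have A1 : a1 = 2 * (cb a3 * cc0 a2 a3).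
    have : a1 / 2 - cb a3 * cc0 a2 a3 = 0 by [].
    by move/eqP; rewrite subr_eq0 => /eqP <-; field.
  clear e0 f0.
  subst a0 a1 li.
  exists 1, (vec 1 (cb a3) (cc0 a2 a3)); split; first exact: oner_neq0.
  split.
    apply/eqP => h; have := congr1 (fun m : 'rV_3 => m 0 0) h.
    by rewrite /vec !mxE /= => /eqP; rewrite oner_eq0.
  move=> x; rewrite qformE linformE; case: (vecE 1 (cb a3) (cc0 a2 a3)) => -> -> ->.
  by rewrite !mxE /= /cc0 /cb; field.
Qed.
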